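(* For the Type A model with cut-off $\varepsilon_0=\mu$, the expected number of links $$L_g=\frac{N(N-1)}{2}\int_0^\mu\!\!\int_0^\mu\frac{\rho_g(\varepsilon)\rho_g(\varepsilon')\,d\varepsilon\,d\varepsilon'}{e^{\beta(\varepsilon+\varepsilon'-\mu)}+1}$$ equals $$L_g=\frac{N(N-1)}{8\sinh^2(\alpha\beta\mu/2)}\Big(e^{\alpha\beta\mu}\,F(-e^{\beta\mu})-2F(-1)+e^{-\alpha\beta\mu}F(-e^{-\beta\mu})\Big),$$ where $F(w)={}_3F_2(1,\alpha,\alpha;1+\alpha,1+\alpha;w)$.
   Context: $N\ge2$ is the number of nodes, $\beta=1/T>0$ the inverse temperature, $\mu>0$ the chemical potential, $\alpha>0$ a parameter (in the paper $\alpha=\beta_c(\gamma-1)/\beta$). The Type A density of hidden energies with cut-off $\mu$ is $\rho_g(\varepsilon)=\frac{\alpha\beta e^{\alpha\beta(\varepsilon-\mu/2)}}{2\sinh(\alpha\beta\mu/2)}$ on $[0,\mu]$. ${}_3F_2$ denotes the generalized hypergeometric function (analytically continued to arguments in $(-\infty,0]$). *)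

(* Defs.v *)
From Stdlib Require Import Reals.
From Coquelicot Require Import Coquelicot.
Open Scope R_scope.

Fixpoint pochhammer (a : R) (k : nat) : R :=
  match k with
  | O => 1
  | S k' => pochhammer a k' * (a + INR k')
  end.

Definition hyp3F2_coeff (a1 a2 a3 b1 b2 : R) (k : nat) : R :=
  pochhammer a1 k * pochhammer a2 k * pochhammer a3 k /
  (pochhammer b1 k * pochhammer b2 k * pochhammer 1 k (* = k! *)).

Definition real_analytic_below (b : R) (G : R -> R) : Prop :=
  forall x0, x0 < b ->
    exists r : R, 0 < r /\ exists c : nat -> R,
      forall x, Rabs (x - x0) < r -> is_series (fun n => c n * (x - x0) ^ n) (G x).

(* G is the analytic continuation (restricted to the real axis (-oo,1)) of the
   3F2 power series, which converges on (-1,1).  Such a G exists and is unique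
   (identity theorem), so it coincides with 3F2 on (-oo,0]. *)
Definition is_hyp3F2 (a1 a2 a3 b1 b2 : R) (G : R -> R) : Prop :=
  real_analytic_below 1 G /\
  forall w, -1 < w < 1 -> is_series (fun k => hyp3F2_coeff a1 a2 a3 b1 b2 k * w ^ k) (G w).

Definition rho_g (alpha beta mu eps : R) : R :=
  alpha * beta * exp (alpha * beta * (eps - mu / 2)) / (2 * sinh (alpha * beta * mu / 2)).

Definition L_g (N : nat) (alpha beta mu : R) : R :=
  INR N * (INR N - 1) / 2 *
  RInt (fun e => RInt (fun e' =>
          rho_g alpha beta mu e * rho_g alpha beta mu e' /
          (exp (beta * (e + e' - mu)) + 1)) 0 mu) 0 mu.

(* Main.v *)
Require Import Defs.
From Stdlib Require Import Reals Lra Lia.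
From Coquelicot Require Import Coquelicot.
Open Scope R_scope.

Lemma bounded_prefix (u : nat -> R) (N : nat) :
  exists M, forall n, (n < N)%nat -> Rabs (u n) <= M.
Proof.
  induction N as [|N [M HM]].
  - exists 0; intros n Hn; lia.
  - exists (Rmax M (Rabs (u N))); intros n Hn.
    destruct (Nat.eq_dec n N) as [->|Hne].
    + apply Rmax_r.
    + eapply Rle_trans; [apply HM; lia| apply Rmax_l].
Qed.

Lemma lim0_bounded (u : nat -> R) : is_lim_seq u 0 ->
  exists M, forall n, Rabs (u n) <= M.
Proof.
  intros H. apply is_lim_seq_spec in H.
  destruct (H (mkposreal 1 Rlt_0_1)) as [N HN].
  destruct (bounded_prefix u N) as [M HM].
  exists (Rmax M 1). intros n.
  destruct (Nat.lt_ge_cases n N) as [Hl|Hg].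
  - eapply Rle_trans; [apply HM; auto| apply Rmax_l].
  - specialize (HN n Hg). simpl in HN. rewrite Rminus_0_r in HN.
    eapply Rle_trans; [left; apply HN| apply Rmax_r].
Qed.

Definition LocPS (G : R -> R) (x0 r : R) (c : nat -> R) : Prop :=
  forall h, Rabs h < r -> is_pseries c h (G (x0 + h)).

Lemma radius_lt (c : nat -> R) (r : R) :
  (forall h, Rabs h < r -> ex_pseries c h) ->
  forall h, Rabs h < r -> Rbar_lt (Rabs h) (CV_radius c).
Proof.
  intros Hc h Hh.
  set (y := (Rabs h + r) / 2).
  assert (Hy : Rabs y < r).
  { unfold y. rewrite Rabs_pos_eq; [lra|]. pose proof (Rabs_pos h); lra. }
  assert (Hle : Rbar_le y (CV_radius c)).
  { destruct (CV_radius_bounded c) as [Hub _]. apply Hub.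
    destruct (Hc y Hy) as [l Hl]. apply is_pseries_R in Hl.
    apply lim0_bounded. apply ex_series_lim_0. exists l; exact Hl. }
  destruct (CV_radius c) as [v| |]; simpl in *; auto.
  unfold y in Hle. lra.
Qed.

Lemma LocPS_radius G x0 r c : LocPS G x0 r c ->
  forall h, Rabs h < r -> Rbar_lt (Rabs h) (CV_radius c).
Proof.
  intros H. apply radius_lt. intros h Hh. eexists. apply H; auto.
Qed.

Lemma LocPS_eq G x0 r c : LocPS G x0 r c ->
  forall h, Rabs h < r -> G (x0 + h) = PSeries c h.
Proof.
  intros H h Hh. symmetry. apply is_pseries_unique. apply H; auto.
Qed.

Lemma LocPS_derive G x0 r c : LocPS G x0 r c ->
  forall h, Rabs h < r -> is_derive G (x0 + h) (PSeries (PS_derive c) h).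
Proof.
  intros H h Hh.
  apply is_derive_ext_loc with (f := fun y => PSeries c (y - x0)).
  - assert (He : 0 < r - Rabs h) by lra.
    exists (mkposreal _ He). intros y Hy.
    unfold ball in Hy; simpl in Hy; unfold AbsRing_ball, abs, minus, plus, opp in Hy; simpl in Hy.
    replace y with (x0 + (y - x0)) at 2 by ring.
    symmetry. apply LocPS_eq with r; auto.
    replace (y - x0) with ((y + - (x0 + h)) + h) by ring.
    eapply Rle_lt_trans; [apply Rabs_triang|]. lra.
  - replace (PSeries (PS_derive c) h) with (scal 1 (PSeries (PS_derive c) h))
      by (unfold scal; simpl; unfold mult; simpl; ring).
    apply (is_derive_comp (PSeries c) (fun y => y - x0)).
    + replace (x0 + h - x0) with h by ring.
      apply is_derive_PSeries. eapply LocPS_radius; eauto.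
    + auto_derive; auto; ring.
Qed.

Lemma LocPS_Derive G x0 r c : LocPS G x0 r c -> LocPS (Derive G) x0 r (PS_derive c).
Proof.
  intros H h Hh.
  rewrite (is_derive_unique _ _ _ (LocPS_derive G x0 r c H h Hh)).
  apply PSeries_correct. apply ex_pseries_derive. eapply LocPS_radius; eauto.
Qed.

Lemma cont_right_zero (f : R -> R) r : 0 < r -> continuity_pt f 0 ->
  (forall h, 0 < h < r -> f h = 0) -> f 0 = 0.
Proof.
  intros Hr Hc Hz.
  destruct (Req_dec (f 0) 0) as [|Hn]; auto. exfalso.
  assert (Hp : 0 < Rabs (f 0)) by (apply Rabs_pos_lt; auto).
  destruct (Hc _ Hp) as [alp [Ha Hal]].
  set (x := Rmin alp r / 2).
  assert (Hx : 0 < x < r /\ x < alp).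
  { unfold x. pose proof (Rmin_l alp r); pose proof (Rmin_r alp r).
    assert (0 < Rmin alp r) by (apply Rmin_pos; auto). lra. }
  specialize (Hal x). simpl in Hal. unfold R_dist, D_x, no_cond in Hal.
  rewrite (Hz x) in Hal by lra.
  assert (Habs : Rabs (x - 0) < alp) by (rewrite Rminus_0_r, Rabs_pos_eq; lra).
  specialize (Hal (conj (conj I (Rlt_not_eq 0 x ltac:(lra))) Habs)).
  rewrite Rminus_0_l, Rabs_Ropp in Hal. lra.
Qed.

Lemma LocPS_zero G s r c : 0 < r -> LocPS G s r c ->
  (forall h, 0 < h < r -> G (s + h) = 0) -> forall n, c n = 0.
Proof.
  intros Hr HL Hz.
  pose proof (LocPS_radius _ _ _ _ HL) as Hrad.
  set (sh := fun k n => c (n + k)%nat).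
  assert (HK : forall k, (forall h, Rabs h < r -> Rbar_lt (Rabs h) (CV_radius (sh k))) /\
                        (forall h, 0 < h < r -> PSeries (sh k) h = 0)).
  { induction k as [|k [IH1 IH2]].
    - assert (Hext : forall n, c n = sh 0%nat n) by (intro n; unfold sh; f_equal; lia).
      split.
      + intros h Hh. rewrite <- (CV_radius_ext _ _ Hext). auto.
      + intros h Hh. rewrite <- (PSeries_ext _ _ h Hext).
        rewrite <- (LocPS_eq _ _ _ _ HL h); [apply Hz; auto| rewrite Rabs_pos_eq; lra].
    - assert (Hext : forall n, PS_decr_1 (sh k) n = sh (S k) n)
        by (intro n; unfold PS_decr_1, sh; f_equal; lia).
      assert (H0 : sh k 0%nat = 0).
      { rewrite <- PSeries_0. apply cont_right_zero with r; auto.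
        apply PSeries_continuity. apply IH1. rewrite Rabs_R0; auto. }
      split.
      + intros h Hh. rewrite <- (CV_radius_ext _ _ Hext), CV_radius_decr_1. auto.
      + intros h Hh. rewrite <- (PSeries_ext _ _ h Hext).
        pose proof (PSeries_decr_1 (sh k) h) as E.
        rewrite IH2, H0 in E by auto.
        assert (Hin : ex_pseries (sh k) h).
        { apply CV_radius_inside, IH1. rewrite Rabs_pos_eq; lra. }
        specialize (E Hin).
        apply Rmult_eq_reg_l with h; [|lra]. lra. }
  intro n. replace (c n) with (sh n 0%nat) by (unfold sh; f_equal).
  rewrite <- PSeries_0. apply cont_right_zero with r; auto.
  - apply PSeries_continuity. apply (proj1 (HK n)). rewrite Rabs_R0; auto.
  - apply (proj2 (HK n)).
Qed.

Lemma LocPS_restrict G x0 r r' c : r' <= r -> LocPS G x0 r c -> LocPS G x0 r' c.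
Proof. intros Hle H h Hh. apply H. lra. Qed.

Lemma identity_thm (G : R -> R) :
  (forall x0, x0 < 1 -> exists r c, 0 < r /\ LocPS G x0 r c) ->
  (forall x, -1 < x < 1 -> G x = 0) -> forall x, x < 1 -> G x = 0.
Proof.
  intros HA H01 x1 Hx1.
  destruct (Rlt_or_le (-1) x1) as [Hl|Hle]; [apply H01; lra|].
  destruct (Req_dec (G x1) 0) as [|Hn]; auto. exfalso.
  set (E := fun y => x1 <= y <= 0 /\ G y <> 0).
  assert (Hb : bound E) by (exists 0; intros y [Hy _]; lra).
  assert (Hne : exists y, E y) by (exists x1; split; [lra|auto]).
  destruct (completeness E Hb Hne) as [s [Hub Hlub]].
  assert (Hs1 : x1 <= s) by (apply Hub; split; [lra|auto]).
  assert (Hs2 : s <= -1).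
  { apply Hlub. intros y [Hy Gy]. destruct (Rle_or_lt y (-1)); auto.
    exfalso; apply Gy, H01; lra. }
  assert (Hz : forall y, s < y <= 0 -> G y = 0).
  { intros y Hy. destruct (Req_dec (G y) 0) as [|Gy]; auto. exfalso.
    assert (y <= s) by (apply Hub; split; [lra|auto]). lra. }
  destruct (HA s ltac:(lra)) as [r [c [Hr HL]]].
  set (r' := Rmin r 1).
  assert (Hr' : 0 < r' /\ r' <= r /\ r' <= 1).
  { unfold r'; split; [apply Rmin_pos; lra|split; [apply Rmin_l|apply Rmin_r]]. }
  assert (HL' : LocPS G s r' c) by (apply LocPS_restrict with r; [lra|exact HL]).
  assert (Hc0 : forall n, c n = 0).
  { apply (LocPS_zero G s r'); try lra; auto. intros h Hh. apply Hz; lra. }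
  assert (HG0 : forall h, Rabs h < r' -> G (s + h) = 0).
  { intros h Hh. rewrite (LocPS_eq _ _ _ _ HL' h Hh).
    rewrite (PSeries_ext _ (fun _ => 0) h Hc0). apply PSeries_const_0. }
  assert (s <= s - r' / 2).
  { apply Hlub. intros y [Hy Gy]. destruct (Rle_or_lt y (s - r'/2)) as [|Hgt]; auto.
    exfalso. assert (y <= s) by (apply Hub; split; auto).
    apply Gy. replace y with (s + (y - s)) by ring. apply HG0.
    rewrite Rabs_left1; lra. }
  lra.
Qed.

Definition Dfun (al : R) (F : R -> R) (w : R) : R :=
  w ^ 2 * Derive (Derive F) w + (1 + 2 * al) * w * Derive F w + al ^ 2 * F w
  - al ^ 2 / (1 - w).

Definition gseq (x0 : R) (n : nat) : R := / (1 - x0) ^ (S n).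

Lemma geom_ps x0 h : x0 < 1 -> Rabs h < 1 - x0 -> is_pseries (gseq x0) h (/ (1 - (x0 + h))).
Proof.
  intros Hx Hh. apply is_pseries_R.
  assert (Hq : Rabs (h / (1 - x0)) < 1).
  { unfold Rdiv. rewrite Rabs_mult, Rabs_inv, (Rabs_pos_eq (1 - x0)) by lra.
    apply Rmult_lt_reg_r with (1 - x0); [lra|].
    rewrite Rmult_assoc, Rinv_l by lra. lra. }
  pose proof (is_series_scal_l (/ (1 - x0)) _ _ (is_series_geom _ Hq)) as H.
  assert (Hn : 1 - x0 - h <> 0) by (apply Rabs_def2 in Hh; lra).
  assert (Hn2 : 1 - (x0 + h) <> 0) by lra.
  replace (/ (1 - (x0 + h))) with (/ (1 - x0) * / (1 - h / (1 - x0))) by (field; split; lra).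
  eapply is_series_ext; [|exact H].
  intros n. unfold gseq. unfold scal; simpl; unfold mult; simpl. unfold Rdiv. rewrite Rpow_mult_distr, pow_inv.
  field. split; [apply pow_nonzero|]; lra.
Qed.


Lemma is_pseries_eq (a : nat -> R) x l l' : is_pseries a x l -> l = l' -> is_pseries a x l'.
Proof. intros H <-; auto. Qed.

Definition dseq (al x0 : R) (c : nat -> R) : nat -> R :=
  let c1 := PS_derive c in let c2 := PS_derive c1 in
  PS_plus (PS_plus (PS_plus (PS_scal (x0 ^ 2) c2)
                            (PS_plus (PS_scal (2 * x0) (PS_incr_1 c2)) (PS_incr_1 (PS_incr_1 c2))))
                   (PS_scal (1 + 2 * al) (PS_plus (PS_scal x0 c1) (PS_incr_1 c1))))
          (PS_plus (PS_scal (al ^ 2) c) (PS_scal (- al ^ 2) (gseq x0))).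

Lemma D_LocPS al F x0 r c : x0 < 1 -> r <= 1 - x0 -> LocPS F x0 r c ->
  LocPS (Dfun al F) x0 r (dseq al x0 c).
Proof.
  intros Hx Hr HL h Hh.
  pose proof (LocPS_Derive _ _ _ _ HL) as HL1.
  pose proof (LocPS_Derive _ _ _ _ HL1) as HL2.
  pose proof (HL h Hh) as P0. pose proof (HL1 h Hh) as P1. pose proof (HL2 h Hh) as P2.
  pose proof (geom_ps x0 h Hx ltac:(lra)) as Pg.
  assert (Hm : forall c0 : R, mult h c0 = mult c0 h) by (intros; apply Rmult_comm).
  unfold dseq.
  eapply is_pseries_eq.
  { apply is_pseries_plus; [apply is_pseries_plus|apply is_pseries_plus].
    - apply is_pseries_plus.
      + apply is_pseries_scal; [apply Hm|exact P2].
      + apply is_pseries_plus.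
        * apply is_pseries_scal; [apply Hm|]. apply is_pseries_incr_1; exact P2.
        * apply is_pseries_incr_1. apply is_pseries_incr_1; exact P2.
    - apply is_pseries_scal; [apply Hm|]. apply is_pseries_plus.
      + apply is_pseries_scal; [apply Hm|exact P1].
      + apply is_pseries_incr_1; exact P1.
    - apply is_pseries_scal; [apply Hm|exact P0].
    - apply is_pseries_scal; [apply Hm|exact Pg]. }
  unfold Dfun, plus, scal; simpl; unfold mult; simpl.
  assert (1 - (x0 + h) <> 0) by (apply Rabs_def2 in Hh; lra). field. auto.
Qed.

Lemma poch_pos b k : 0 < b -> 0 < pochhammer b k.
Proof.
  intros Hb. induction k; simpl; [lra|].
  apply Rmult_lt_0_compat; auto. pose proof (pos_INR k); lra.
Qed.

Lemma poch_rel a k : pochhammer (1 + a) k * a = pochhammer a k * (a + INR k).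
Proof.
  induction k; simpl pochhammer; [simpl; ring|].
  rewrite S_INR.
  replace (pochhammer (1 + a) k * (1 + a + INR k) * a)
    with (pochhammer (1 + a) k * a * (1 + a + INR k)) by ring.
  rewrite IHk. ring.
Qed.

Lemma coeff_eq a k : 0 < a ->
  hyp3F2_coeff 1 a a (1 + a) (1 + a) k = a ^ 2 / (a + INR k) ^ 2.
Proof.
  intros Ha. unfold hyp3F2_coeff.
  pose proof (poch_pos 1 k Rlt_0_1). pose proof (poch_pos a k Ha).
  pose proof (pos_INR k).
  assert (Hq : pochhammer (1 + a) k = pochhammer a k * (a + INR k) / a).
  { rewrite <- poch_rel. field. lra. }
  rewrite Hq. field. repeat split; lra.
Qed.

Lemma analytic_LocPS F : real_analytic_below 1 F ->
  forall x0, x0 < 1 -> exists r c, 0 < r /\ LocPS F x0 r c.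
Proof.
  intros HA x0 Hx. destruct (HA x0 Hx) as [r [Hr [c Hc]]].
  exists r, c. split; auto. intros h Hh. apply is_pseries_R.
  specialize (Hc (x0 + h)). replace (x0 + h - x0) with h in Hc by ring. auto.
Qed.

Lemma D_zero al F : 0 < al -> is_hyp3F2 1 al al (1 + al) (1 + al) F ->
  forall w, w < 1 -> Dfun al F w = 0.
Proof.
  intros Hal [HA Hser].
  apply identity_thm.
  - intros x0 Hx. destruct (analytic_LocPS F HA x0 Hx) as [r [c [Hr HL]]].
    exists (Rmin r (1 - x0)), (dseq al x0 c). split.
    + apply Rmin_pos; lra.
    + apply D_LocPS; auto. apply Rmin_r. apply LocPS_restrict with r; auto. apply Rmin_l.
  - intros x Hx.
    assert (HL : LocPS F 0 1 (hyp3F2_coeff 1 al al (1 + al) (1 + al))).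
    { intros h Hh. apply is_pseries_R. rewrite Rplus_0_l. apply Hser.
      apply Rabs_def2 in Hh; lra. }
    pose proof (D_LocPS al F 0 1 _ ltac:(lra) ltac:(lra) HL) as HD.
    assert (Hz : forall n, dseq al 0 (hyp3F2_coeff 1 al al (1 + al) (1 + al)) n = 0).
    { intros n. unfold dseq, PS_plus, PS_scal, PS_incr_1, PS_derive, gseq.
      unfold plus, scal, zero; simpl; unfold mult; simpl.
      destruct n as [|[|m]]; cbn -[INR]; rewrite ?coeff_eq by auto; rewrite ?S_INR; simpl INR.
      - field; lra.
      - field; lra.
      - change (match m with 0%nat => 1 | S _ => INR m + 1 end) with (INR (S m)).
        rewrite S_INR, Rminus_0_r, pow1. pose proof (pos_INR m). field; lra. }
    replace x with (0 + x) by ring.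
    rewrite (LocPS_eq _ _ _ _ HD x) by (apply Rabs_def1; lra).
    rewrite (PSeries_ext _ (fun _ => 0) x Hz). apply PSeries_const_0.
Qed.

Lemma der_mult (f g : R -> R) (x df dg : R) : is_derive f x df -> is_derive g x dg ->
  is_derive (fun t => f t * g t) x (df * g x + f x * dg).
Proof.
  intros H1 H2. pose proof (is_derive_mult f g x df dg H1 H2) as H.
  apply H. intros; apply Rmult_comm.
Qed.

Lemma der_comp (f g : R -> R) (x df dg : R) : is_derive g x dg -> is_derive f (g x) df ->
  is_derive (fun t => f (g t)) x (dg * df).
Proof.
  intros H1 H2. exact (@is_derive_comp R_AbsRing R_NormedModule f g x df dg H2 H1).
Qed.

Lemma der_plus (f g : R -> R) (x df dg : R) : is_derive f x df -> is_derive g x dg ->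
  is_derive (fun t => f t + g t) x (df + dg).
Proof. intros H1 H2. exact (is_derive_plus f g x df dg H1 H2). Qed.

Lemma der_eq (f : R -> R) (x l l' : R) : is_derive f x l -> l = l' -> is_derive f x l'.
Proof. intros H <-; auto. Qed.

Lemma F_ders F : real_analytic_below 1 F -> forall w, w < 1 ->
  is_derive F w (Derive F w) /\ is_derive (Derive F) w (Derive (Derive F) w).
Proof.
  intros HA w Hw. destruct (analytic_LocPS F HA w Hw) as [r [c [Hr HL]]].
  assert (H0 : Rabs 0 < r) by (rewrite Rabs_R0; auto).
  pose proof (LocPS_derive _ _ _ _ HL 0 H0) as D1.
  pose proof (LocPS_derive _ _ _ _ (LocPS_Derive _ _ _ _ HL) 0 H0) as D2.
  rewrite Rplus_0_r in D1, D2.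
  split; apply Derive_correct; eexists; eauto.
Qed.

Section Calc.
Variables (al be mu : R) (F : R -> R).
Hypothesis Hal : 0 < al.
Hypothesis Hbe : 0 < be.
Hypothesis HF : is_hyp3F2 1 al al (1 + al) (1 + al) F.

Definition K t := exp (al * t) * F (- exp t).
Definition K1 t := exp (al * t) * (al * F (- exp t) + (- exp t) * Derive F (- exp t)).

Lemma w_lt t : - exp t < 1.
Proof. pose proof (exp_pos t); lra. Qed.

Lemma der_exp_al t : is_derive (fun t => exp (al * t)) t (al * exp (al * t)).
Proof. auto_derive; auto; ring. Qed.

Lemma der_mexp t : is_derive (fun t => - exp t) t (- exp t).
Proof. auto_derive; auto; ring. Qed.

Lemma K_der t : is_derive K t (K1 t).
Proof.
  destruct (F_ders F (proj1 HF) _ (w_lt t)) as [D1 D2].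
  unfold K. eapply der_eq.
  - apply der_mult; [apply der_exp_al|].
    apply (der_comp F (fun t => - exp t)); [apply der_mexp| exact D1].
  - unfold K1. ring.
Qed.

Lemma der_const (c t : R) : is_derive (fun _ => c) t 0.
Proof. auto_derive; auto. Qed.

Lemma K1_der t : is_derive K1 t (al ^ 2 * exp (al * t) / (exp t + 1)).
Proof.
  destruct (F_ders F (proj1 HF) _ (w_lt t)) as [D1 D2].
  pose proof (D_zero al F Hal HF _ (w_lt t)) as HD. unfold Dfun in HD.
  unfold K1. eapply der_eq.
  - apply der_mult; [apply der_exp_al|].
    apply der_plus.
    + apply der_mult; [apply der_const|].
      apply (der_comp F (fun t => - exp t)); [apply der_mexp| exact D1].
    + apply der_mult; [apply der_mexp|].
      apply (der_comp (Derive F) (fun t => - exp t)); [apply der_mexp| exact D2].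
  - pose proof (exp_pos t). set (w := - exp t) in *.
    set (E := exp (al * t)).
    replace (exp t + 1) with (1 - w) by (unfold w; ring).
    assert (Hw : 1 - w <> 0) by (unfold w; lra).
    assert (HD' : w ^ 2 * Derive (Derive F) w + (1 + 2 * al) * w * Derive F w + al ^ 2 * F w
                  = al ^ 2 / (1 - w)) by lra.
    change (- exp t) with w.
    transitivity (E * (w ^ 2 * Derive (Derive F) w + (1 + 2 * al) * w * Derive F w + al ^ 2 * F w));
      [ring|].
    rewrite HD'. field. auto.
Qed.


Definition P s := K (be * (s - mu)) / (al ^ 2 * be ^ 2).
Definition P1 s := K1 (be * (s - mu)) / (al ^ 2 * be).
Definition phi s := exp (al * be * (s - mu)) / (exp (be * (s - mu)) + 1).

Lemma der_lin s : is_derive (fun s => be * (s - mu)) s be.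
Proof. auto_derive; auto; ring. Qed.

Lemma P_der s : is_derive P s (P1 s).
Proof.
  unfold P, Rdiv. eapply der_eq.
  - apply der_mult; [|apply der_const].
    apply (der_comp K (fun s => be * (s - mu))); [apply der_lin|apply K_der].
  - unfold P1. field. lra.
Qed.

Lemma P1_der s : is_derive P1 s (phi s).
Proof.
  unfold P1, Rdiv. eapply der_eq.
  - apply der_mult; [|apply der_const].
    apply (der_comp K1 (fun s => be * (s - mu))); [apply der_lin|apply K1_der].
  - unfold phi. replace (al * (be * (s - mu))) with (al * be * (s - mu)) by ring.
    pose proof (exp_pos (be * (s - mu))). field. lra.
Qed.

Lemma phi_cont s : continuous phi s.
Proof.
  assert (H : ex_derive phi s).
  { unfold phi. auto_derive. pose proof (exp_pos (be * (s + - mu))). lra. }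
  exact (ex_derive_continuous phi s H).
Qed.

Lemma P1_cont s : continuous P1 s.
Proof.
  assert (H : ex_derive P1 s) by (eexists; apply P1_der).
  exact (ex_derive_continuous P1 s H).
Qed.

End Calc.
Ltac fixeq := match goal with |- ?a = ?b => change (@eq R a b) end; cbv beta.

Lemma der_minus (f g : R -> R) (x df dg : R) : is_derive f x df -> is_derive g x dg ->
  is_derive (fun t => f t - g t) x (df - dg).
Proof. intros H1 H2. exact (is_derive_minus f g x df dg H1 H2). Qed.

Lemma RInt_eq (f : R -> R) a b l l' : is_RInt f a b l -> l = l' -> is_RInt f a b l'.
Proof. intros H <-; auto. Qed.

Lemma sinh_pos x : 0 < x -> 0 < sinh x.
Proof. intros H. unfold sinh. pose proof (exp_increasing (-x) x ltac:(lra)). lra. Qed.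

Lemma der_shift (f : R -> R) (c x df : R) : is_derive f (c + x) df -> is_derive (fun t => f (c + t)) x df.
Proof.
  intros H. eapply der_eq. apply (der_comp f (fun t => c + t)); [|exact H].
  auto_derive; auto; ring. ring.
Qed.

Lemma der_shift_r (f : R -> R) (c x df : R) : is_derive f (x + c) df -> is_derive (fun t => f (t + c)) x df.
Proof.
  intros H. eapply der_eq. apply (der_comp f (fun t => t + c)); [|exact H].
  auto_derive; auto; ring. ring.
Qed.

Theorem mainTheorem4 (N : nat) (beta mu alpha : R) (F : R -> R) :
  (2 <= N)%nat -> 0 < beta -> 0 < mu -> 0 < alpha ->
  is_hyp3F2 1 alpha alpha (1 + alpha) (1 + alpha) F ->
  L_g N alpha beta mu =
    INR N * (INR N - 1) / (8 * (sinh (alpha * beta * mu / 2)) ^ 2) *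
    (exp (alpha * beta * mu) * F (- exp (beta * mu))
     - 2 * F (-1)
     + exp (- (alpha * beta * mu)) * F (- exp (- (beta * mu)))).
Proof.
  intros HN Hbe Hmu Hal HF.
  assert (Hs : 0 < sinh (alpha * beta * mu / 2)).
  { apply sinh_pos. pose proof (Rmult_lt_0_compat _ _ (Rmult_lt_0_compat _ _ Hal Hbe) Hmu). lra. }
  set (C := (alpha * beta) ^ 2 / (4 * sinh (alpha * beta * mu / 2) ^ 2)).
  set (Q := P alpha beta mu F). set (Q1 := P1 alpha beta mu F). set (ph := phi alpha beta mu).
  assert (HQ : forall s, is_derive Q s (Q1 s)) by (intros; apply P_der; auto).
  assert (HQ1 : forall s, is_derive Q1 s (ph s)) by (intros; apply P1_der; auto).
  assert (Hin : forall e, RInt (fun e' => rho_g alpha beta mu e * rho_g alpha beta mu e' /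
          (exp (beta * (e + e' - mu)) + 1)) 0 mu = C * (Q1 (e + mu) - Q1 e)).
  { intro e. rewrite (RInt_ext _ (fun e' => C * ph (e + e'))).
    2:{ intros x _. unfold rho_g, ph, phi, C.
        assert (HX : exp (alpha * beta * (e - mu / 2)) * exp (alpha * beta * (x - mu / 2))
                     = exp (alpha * beta * (e + x - mu))) by (rewrite <- exp_plus; apply f_equal; field).
        rewrite <- HX. pose proof (exp_pos (beta * (e + x - mu))). match goal with |- ?a = ?b => change (@eq R a b) end. field; repeat split; lra. }
    apply is_RInt_unique.
    eapply RInt_eq.
    - apply (is_RInt_derive (fun e' => C * Q1 (e + e')) (fun e' => C * ph (e + e'))).
      + intros x _. eapply der_eq.
        * apply der_mult; [apply der_const|]. apply der_shift. apply HQ1.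
        * fixeq; ring.
      + intros x _.
        assert (Hd : ex_derive (fun e' => C * ph (e + e')) x).
        { unfold ph, phi. auto_derive. pose proof (exp_pos (beta * (e + x + - mu))). lra. }
        exact (ex_derive_continuous _ x Hd).
    - unfold minus, plus, opp; simpl. rewrite Rplus_0_r. ring. }
  unfold L_g. rewrite (RInt_ext _ (fun e => C * (Q1 (e + mu) - Q1 e))) by (intros; apply Hin).
  replace (RInt (fun e => C * (Q1 (e + mu) - Q1 e)) 0 mu)
    with (C * ((Q (mu + mu) - Q mu) - (Q (0 + mu) - Q 0))).
  2:{ symmetry. apply is_RInt_unique. eapply RInt_eq.
    - apply (is_RInt_derive (fun e => C * (Q (e + mu) - Q e))).
      + intros x _. eapply der_eq.
        * apply der_mult; [apply der_const|]. apply der_minus; [apply der_shift_r, HQ| apply HQ].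
        * fixeq; ring.
      + intros x _.
        assert (Hd : ex_derive (fun e => C * (Q1 (e + mu) - Q1 e)) x).
        { eexists. apply der_mult; [apply der_const|].
          apply der_minus; [apply der_shift_r, HQ1| apply HQ1]. }
        exact (ex_derive_continuous _ x Hd).
    - unfold minus, plus, opp; simpl. ring. }
  unfold Q, P, K, C.
  replace (beta * (mu + mu - mu)) with (beta * mu) by ring.
  replace (beta * (0 + mu - mu)) with 0 by ring.
  replace (beta * (mu - mu)) with 0 by ring.
  replace (beta * (0 - mu)) with (- (beta * mu)) by ring.
  rewrite Rmult_0_r, exp_0.
  replace (alpha * (beta * mu)) with (alpha * beta * mu) by ring.
  replace (alpha * - (beta * mu)) with (- (alpha * beta * mu)) by ring.
  replace (F (- (1))) with (F (-1)) by (f_equal; ring).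
  fixeq. field. repeat split; lra.
Qed.
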